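(* Let $\mathcal M=\{A,B,C,D\}$ be a minimal non-passive discrete-time model. Then for every Hermitian $X>0$ there exists $\xi^*(X)>0$ such that $\widetilde W(X,\mathcal M_{-\xi^*(X)})\ge0$. Moreover, for every $\xi>\xi^*(X)$ the model $\mathcal M_{-\xi}$ is passive (indeed $\widetilde W(X,\mathcal M_{-\xi})\ge0$).
   Context: A discrete-time model is $\mathcal M=\{A,B,C,D\}$ with $A\in\mathbb C^{n\times n}$, $B\in\mathbb C^{n\times m}$, $C\in\mathbb C^{m\times n}$, $D\in\mathbb C^{m\times m}$; minimal means $(A,B)$ controllable and $(A,C)$ observable. For a model $\mathcal N=\{A',B',C',D'\}$ and Hermitian $X$, $$\widetilde W(X,\mathcal N)=\begin{bmatrix} X & XA' & XB'\\ A'^{\mathsf H}X & X & C'^{\mathsf H}\\ B'^{\mathsf H}X & C' & D'^{\mathsf H}+D'\end{bmatrix},\qquad W(X,\mathcal N)=\begin{bmatrix} X-A'^{\mathsf H}XA' & C'^{\mathsf H}-A'^{\mathsf H}XB'\\ C'-B'^{\mathsf H}XA' & D'^{\mathsf H}+D'-B'^{\mathsf H}XB'\end{bmatrix};$$ $\mathcal N$ is called passive if there is a Hermitian $X>0$ with $W(X,\mathcal N)\ge0$ (equivalently $\widetilde W(X,\mathcal N)\ge0$). For $\xi>-1$, $\mathcal M_{-\xi}=\{\tfrac{A}{1+\xi},\tfrac{B}{1+\xi},\tfrac{C}{1+\xi},\tfrac{D+\xi I_m}{1+\xi}\}$. *)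

(* Defs.v *)
From HB Require Import structures.
From mathcomp Require Import all_boot all_order all_algebra.
From mathcomp Require Import complex.
From mathcomp Require Import reals.
Set Implicit Arguments. Unset Strict Implicit. Unset Printing Implicit Defensive.
Import Order.TTheory GRing.Theory Num.Theory.
Local Open Scope ring_scope.

Section Defs.
Variable R : realType.
Local Notation C := (complex R).

Definition ctr (p q : nat) (M : 'M[C]_(p, q)) : 'M[C]_(q, p) :=
  (map_mx Num.conj M)^T.

Definition hermitian (p : nat) (M : 'M[C]_p) : Prop := ctr M = M.

Definition psd (p : nat) (M : 'M[C]_p) : Prop :=
  hermitian M /\ forall v : 'cV[C]_p, 0 <= (ctr v *m M *m v) 0 0.

Definition pd (p : nat) (M : 'M[C]_p) : Prop :=
  hermitian M /\ forall v : 'cV[C]_p, v != 0 -> 0 < (ctr v *m M *m v) 0 0.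

Record model (n m : nat) := Model {
  mA : 'M[C]_n; mB : 'M[C]_(n, m); mC : 'M[C]_(m, n); mD : 'M[C]_m }.

Definition controllable (n m : nat) (A : 'M[C]_n) (B : 'M[C]_(n, m)) : bool :=
  \rank (\mxrow_(k < n) (A ^+ k *m B)) == n.
Definition observable (n m : nat) (A : 'M[C]_n) (Cm : 'M[C]_(m, n)) : bool :=
  \rank (\mxcol_(k < n) (Cm *m A ^+ k)) == n.

Definition minimal (n m : nat) (M : model n m) : Prop :=
  controllable (mA M) (mB M) /\ observable (mA M) (mC M).

Definition Wt (n m : nat) (X : 'M[C]_n) (N : model n m) : 'M[C]_(n + (n + m)) :=
  block_mx X (row_mx (X *m mA N) (X *m mB N))
           (col_mx (ctr (mA N) *m X) (ctr (mB N) *m X))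
           (block_mx X (ctr (mC N)) (mC N) (ctr (mD N) + mD N)).

Definition W (n m : nat) (X : 'M[C]_n) (N : model n m) : 'M[C]_(n + m) :=
  block_mx (X - ctr (mA N) *m X *m mA N) (ctr (mC N) - ctr (mA N) *m X *m mB N)
           (mC N - ctr (mB N) *m X *m mA N)
           (ctr (mD N) + mD N - ctr (mB N) *m X *m mB N).

Definition passive (n m : nat) (N : model n m) : Prop :=
  exists X : 'M[C]_n, pd X /\ psd (W X N).

(* M_{-xi} for real xi > -1 *)
Definition shift (n m : nat) (M : model n m) (xi : R) : model n m :=
  let s := (1 + real_complex R xi)^-1 in
  Model (s *: mA M) (s *: mB M) (s *: mC M) (s *: (mD M + (real_complex R xi)%:M)).
End Defs.

(* Main.v *)
Require Import Defs.
From HB Require Import structures.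
From mathcomp Require Import all_boot all_order all_algebra.
From mathcomp Require Import complex.
From mathcomp Require Import reals.
From mathcomp Require Import sesquilinear spectral.
Import Order.TTheory GRing.Theory Num.Theory.
Set Implicit Arguments. Unset Strict Implicit. Unset Printing Implicit Defensive.
Local Open Scope ring_scope.

Section H.
Variable R : realType.
Local Notation C := (complex R).

Lemma ctrE p q (M : 'M[C]_(p, q)) : ctr M = map_mx Num.conj (M ^T).
Proof. by rewrite /ctr map_trmx. Qed.

Lemma ctr_mul p q r (A : 'M[C]_(p, q)) (B : 'M[C]_(q, r)) :
  ctr (A *m B) = ctr B *m ctr A.
Proof. by rewrite /ctr map_mxM trmx_mul. Qed.

Lemma ctrK p q (A : 'M[C]_(p, q)) : ctr (ctr A) = A.
Proof.
by apply/matrixP => i j; rewrite /ctr !mxE conjCK.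
Qed.

Lemma ctrD p q (A B : 'M[C]_(p, q)) : ctr (A + B) = ctr A + ctr B.
Proof. by apply/matrixP => i j; rewrite /ctr !mxE rmorphD. Qed.

Lemma ctrN p q (A : 'M[C]_(p, q)) : ctr (- A) = - ctr A.
Proof. by apply/matrixP => i j; rewrite /ctr !mxE rmorphN. Qed.

Lemma ctrB p q (A B : 'M[C]_(p, q)) : ctr (A - B) = ctr A - ctr B.
Proof. by rewrite ctrD ctrN. Qed.

Lemma ctrZ p q (a : C) (A : 'M[C]_(p, q)) : ctr (a *: A) = a^* *: ctr A.
Proof. by apply/matrixP => i j; rewrite /ctr !mxE rmorphM. Qed.

Lemma ctr0 p q : ctr (0 : 'M[C]_(p, q)) = 0.
Proof. by apply/matrixP => i j; rewrite /ctr !mxE rmorph0. Qed.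

Lemma ctr_scalar p (a : C) : ctr (a%:M : 'M[C]_p) = a^*%:M.
Proof.
apply/matrixP => i j; rewrite /ctr !mxE.
rewrite eq_sym; case: (i == j); first by rewrite !mulr1n.
by rewrite !mulr0n rmorph0.
Qed.

Lemma ctr_row p q1 q2 (A : 'M[C]_(p, q1)) (B : 'M[C]_(p, q2)) :
  ctr (row_mx A B) = col_mx (ctr A) (ctr B).
Proof. by rewrite /ctr map_row_mx tr_row_mx. Qed.

Lemma ctr_col p1 p2 q (A : 'M[C]_(p1, q)) (B : 'M[C]_(p2, q)) :
  ctr (col_mx A B) = row_mx (ctr A) (ctr B).
Proof. by rewrite /ctr map_col_mx tr_col_mx. Qed.

Lemma ctr_block p1 p2 q1 q2 (A : 'M[C]_(p1, q1)) (B : 'M[C]_(p1, q2))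
  (Cc : 'M[C]_(p2, q1)) (D : 'M[C]_(p2, q2)) :
  ctr (block_mx A B Cc D) = block_mx (ctr A) (ctr Cc) (ctr B) (ctr D).
Proof. by rewrite /ctr map_block_mx tr_block_mx. Qed.

Lemma Wt_herm n m (X : 'M[C]_n) (N : model R n m) :
  Defs.hermitian X -> Defs.hermitian (Wt X N).
Proof.
move=> hX; rewrite /Defs.hermitian /Wt ctr_block ctr_row ctr_col ctr_block.
by rewrite !ctr_mul !ctrK hX ctrD addrC ctrK.
Qed.

Lemma quad_real p (H : 'M[C]_p) (v : 'cV[C]_p) :
  Defs.hermitian H -> (ctr v *m H *m v) 0 0 \is Num.real.
Proof.
move=> hH; rewrite CrealE; apply/eqP.
have -> : ((ctr v *m H *m v) 0 0)^* = (ctr (ctr v *m H *m v)) 0 0.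
  by rewrite /ctr !mxE.
by rewrite !ctr_mul ctrK hH mulmxA.
Qed.

Lemma Wt_eq n m (X : 'M[C]_n) (N : model R n m) :
  Wt X N = block_mx X (X *m row_mx (mA N) (mB N))
     (ctr (row_mx (mA N) (mB N)) *m X)
     (block_mx X (ctr (mC N)) (mC N) (ctr (mD N) + mD N)).
Proof. by rewrite /Wt mul_mx_row ctr_row mul_col_mx. Qed.

Lemma W_eq n m (X : 'M[C]_n) (N : model R n m) :
  W X N = block_mx X (ctr (mC N)) (mC N) (ctr (mD N) + mD N)
     - ctr (row_mx (mA N) (mB N)) *m X *m row_mx (mA N) (mB N).
Proof.
rewrite /W ctr_row mul_col_mx mul_col_row -!mulmxA.
by rewrite opp_block_mx add_block_mx.
Qed.

Lemma W_form n m (X : 'M[C]_n) (N : model R n m) (v : 'cV[C]_(n + m)) :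
  let F := row_mx (mA N) (mB N) in
  let u := col_mx (- (F *m v)) v in
  ctr v *m W X N *m v = ctr u *m Wt X N *m u.
Proof.
move=> F u; rewrite W_eq Wt_eq -/F /u ctr_col ctrN ctr_mul.
rewrite mul_row_block mul_row_col !mulNmx !mulmxA addNr mul0mx add0r.
by rewrite mulmxDr mulmxDl [RHS]mulmxDl mulmxN !mulNmx !mulmxA addrC.
Qed.

Lemma psdWt_passive n m (X : 'M[C]_n) (N : model R n m) :
  pd X -> psd (Wt X N) -> passive N.
Proof.
move=> [hX pX] [_ pW]; exists X; split; first by split.
split.
  rewrite /Defs.hermitian W_eq ctrB !ctr_mul ctrK hX ctr_block ctrK ctrD ctrK.
  by rewrite hX [mD N + _]addrC mulmxA.
move=> v; rewrite W_form; exact: pW.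
Qed.

Lemma ctr_tstar p q (M : 'M[C]_(p, q)) : ctr M = (M ^t* )%sesqui.
Proof. by rewrite /ctr map_trmx. Qed.

Lemma pos_min p (f : 'I_p -> R) : (forall i, 0 < f i) ->
  exists c : R, 0 < c /\ c <= 1 /\ forall i, c <= f i.
Proof.
move=> fpos; exists (\big[Order.min/1]_(i < p) f i); split; last split.
- elim/big_ind: _ => //= x y hx hy.
  by rewrite lt_min hx hy.
- exact: bigmin_le_id.
- move=> i; exact: bigmin_le.
Qed.

Lemma pd_lower p (X : 'M[C]_p) : pd X ->
  exists c : R, 0 < c /\ c <= 1 /\ forall v : 'cV[C]_p,
    c%:C%C * (ctr v *m v) 0 0 <= (ctr v *m X *m v) 0 0.
Proof.
move=> [hX pX].
have hX' : X \is hermsymmx.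
  rewrite qualifE /= expr0 scale1r; apply/eqP.
  by rewrite -ctr_tstar hX.
have /orthomx_spectralP eX := hermitian_normalmx hX'.
set U := spectralmx X in eX; set d := spectral_diag X in eX.
have Uu : U \is unitarymx := spectral_unitarymx X.
have UU : U *m ctr U = 1%:M by rewrite ctr_tstar; apply/unitarymxP.
have UU' : ctr U *m U = 1%:M by apply: mulmx1C.
have eXv v : ctr v *m X *m v = ctr (U *m v) *m diag_mx d *m (U *m v).
  by rewrite {1}eX invmx_unitary // -ctr_tstar ctr_mul !mulmxA.
have fd w : (ctr w *m diag_mx d *m w) 0 0 = \sum_i d 0 i * ((w i 0)^* * w i 0).
  rewrite mul_mx_diag !mxE; apply: eq_bigr => i _.
  by rewrite !mxE mulrA [_ * d 0 i]mulrC.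
have fn w : (ctr w *m w) 0 0 = \sum_i (w i 0)^* * w i 0.
  by rewrite !mxE; apply: eq_bigr => i _; rewrite !mxE.
have nU v : ctr (U *m v) *m (U *m v) = ctr v *m v.
  by rewrite ctr_mul mulmxA -(mulmxA (ctr v)) UU' mulmx1.
have dpos i : 0 < d 0 i.
  pose e : 'cV[C]_p := delta_mx i 0.
  pose v := ctr U *m e.
  have Ue : U *m v = e by rewrite /v mulmxA UU mul1mx.
  have vn0 : v != 0.
    apply/eqP => v0; move: Ue; rewrite v0 mulmx0 => /matrixP /(_ i 0).
    by rewrite !mxE !eqxx /= => /eqP; rewrite eq_sym oner_eq0.
  have := pX v vn0; rewrite eXv Ue fd (bigD1 i) //= big1 ?addr0.
    by rewrite !mxE !eqxx /= rmorph1 !mulr1.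
  by move=> k hk; rewrite !mxE (negbTE hk) /= rmorph0 !mul0r mulr0.
have dreal i : (complex.Re (d 0 i))%:C%C = d 0 i by apply: RRe_real; apply: gtr0_real.
have [c [c0 [c1 hc]]] : exists c : R, 0 < c /\ c <= 1 /\ forall i, c <= complex.Re (d 0 i).
  by apply: pos_min => i; rewrite -ltcR dreal dpos.
exists c; split => //; split => // v.
rewrite eXv -nU fd fn mulr_sumr; apply: ler_sum => i _.
apply: ler_wpM2r; first by rewrite mulrC mul_conjC_ge0.
by rewrite -dreal lecR.
Qed.

Lemma quad_upper p (Q : 'M[C]_p) : exists K : C, 0 <= K /\
  forall v : 'cV[C]_p, `|(ctr v *m Q *m v) 0 0| <= K * (ctr v *m v) 0 0.
Proof.
exists (\sum_j \sum_i `|Q i j|); split.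
  by apply: sumr_ge0 => j _; apply: sumr_ge0 => i _; exact: normr_ge0.
move=> v; set N := (ctr v *m v) 0 0.
have hN k : `|v k 0| ^+ 2 <= N.
  rewrite /N !mxE (bigD1 k) //= normCK mulrC !mxE lerDl.
  by apply: sumr_ge0 => i _; rewrite !mxE mulrC mul_conjC_ge0.
have hab i j : `|v i 0| * `|v j 0| <= N.
  have := real_leVge (normr_real (v i 0)) (normr_real (v j 0)).
  case/orP => h.
    by apply: le_trans (hN j); rewrite expr2; apply: ler_wpM2r.
  by apply: le_trans (hN i); rewrite expr2; apply: ler_wpM2l.
have e : (ctr v *m Q *m v) 0 0 = \sum_j \sum_i (v i 0)^* * Q i j * v j 0.
  rewrite !mxE; apply: eq_bigr => j _; rewrite !mxE mulr_suml.
  by apply: eq_bigr => i _; rewrite !mxE.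
rewrite e mulr_suml; apply: le_trans (ler_norm_sum _ _ _) _; apply: ler_sum => j _.
rewrite mulr_suml; apply: le_trans (ler_norm_sum _ _ _) _; apply: ler_sum => i _.
by rewrite !normrM norm_conjC mulrAC mulrC; apply: ler_wpM2l => //.
Qed.

Definition Pm n m (X : 'M[C]_n) : 'M[C]_(n + (n + m)) :=
  block_mx X 0 0 (block_mx X 0 0 (2%:M)).

Lemma Wt_shift n m (X : 'M[C]_n) (M : model R n m) (xi : R) :
  0 <= xi ->
  (1 + xi%:C%C) *: Wt X (shift M xi) = Wt X M + xi%:C%C *: Pm m X.
Proof.
move=> xi0.
set t := 1 + xi%:C%C.
have t0 : t != 0.
  by rewrite /t; apply: lt0r_neq0; apply: ltr_pwDl => //; rewrite ler0c.
have xiJ : (xi%:C%C)^* = xi%:C%C.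
  by apply/eqP; rewrite -CrealE; apply/complex_realP; exists xi.
have tJ : (t^-1)^* = t^-1.
  by rewrite fmorphV /t rmorphD rmorph1; congr (1 + _)^-1; exact: xiJ.
have ts : t * t^-1 = 1 by rewrite mulfV.
rewrite /Wt /shift /Pm /= -/t.
rewrite !ctrZ tJ !ctrD ctr_scalar xiJ.
rewrite !scale_block_mx !scale_row_mx !scale_col_mx.
rewrite -!scalemxAl -!scalemxAr scalerDr !scalerA ts !scale1r.
rewrite !scaler0 !add_block_mx !addr0 /t scalerDl scale1r.
congr block_mx; congr block_mx.
rewrite addrACA; congr (_ + _).
apply/matrixP => i j; rewrite !mxE -mulrnDl -mulr2n mulrnAr.
by rewrite mulr_natr.
Qed.

Lemma Pm_form n m (X : 'M[C]_n) (x y : 'cV[C]_n) (z : 'cV[C]_m) :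
  let v := col_mx x (col_mx y z) in
  ctr v *m Pm m X *m v =
    ctr x *m X *m x + ctr y *m X *m y + 2%:R *: (ctr z *m z).
Proof.
move=> v; rewrite /v /Pm !ctr_col !mul_row_block !mul_row_col.
rewrite !mulmx0 !addr0 !add0r mul_mx_scalar mul_row_col -scalemxAl.
by rewrite addrA.
Qed.

Lemma n_form n m (x y : 'cV[C]_n) (z : 'cV[C]_m) :
  let v := col_mx x (col_mx y z) in
  ctr v *m v = ctr x *m x + ctr y *m y + ctr z *m z.
Proof.
by move=> v; rewrite /v !ctr_col !mul_row_col addrA.
Qed.

Lemma nrm_ge0 p (v : 'cV[C]_p) : 0 <= (ctr v *m v) 0 0.
Proof.
by rewrite !mxE; apply: sumr_ge0 => i _; rewrite !mxE mulrC mul_conjC_ge0.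
Qed.

Lemma entD p q (A B : 'M[C]_(p, q)) i j : (A + B) i j = A i j + B i j.
Proof. by rewrite mxE. Qed.

Lemma entZ p q a (A : 'M[C]_(p, q)) i j : (a *: A) i j = a * A i j.
Proof. by rewrite mxE. Qed.

Lemma key_psd n m (M : model R n m) (X : 'M[C]_n) (c : R) (K : C) (xi : R) :
  pd X -> 0 < c -> c <= 1 ->
  (forall v : 'cV[C]_n, c%:C%C * (ctr v *m v) 0 0 <= (ctr v *m X *m v) 0 0) ->
  (forall v : 'cV[C]_(n + (n + m)),
     `|(ctr v *m Wt X M *m v) 0 0| <= K * (ctr v *m v) 0 0) ->
  0 <= xi -> K <= (xi * c)%:C%C ->
  psd (Wt X (shift M xi)).
Proof.
move=> [hX pX] c0 c1 hc hK xi0 Kle.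
split; first exact: Wt_herm.
move=> v.
have [x [y [z ->]]] : exists x y z, v = col_mx x (col_mx y z).
  by exists (usubmx v), (usubmx (dsubmx v)), (dsubmx (dsubmx v)); rewrite !vsubmxK.
have t0 : 0 < 1 + xi%:C%C by apply: ltr_pwDl => //; rewrite ler0c.
rewrite -(pmulr_rge0 _ t0).
rewrite -entZ scalemxAl scalemxAr Wt_shift // mulmxDr mulmxDl entD.
rewrite -scalemxAr -scalemxAl entZ.
have c2 : c%:C%C <= 2%:R.
  have -> : (2%:R : C) = (2%:R : R)%:C%C by rewrite rmorph_nat.
  by rewrite lecR; apply: le_trans c1 _; rewrite ler1n.
have hP : c%:C%C * (ctr (col_mx x (col_mx y z)) *m col_mx x (col_mx y z)) 0 0 <=
     (ctr (col_mx x (col_mx y z)) *m Pm m X *m col_mx x (col_mx y z)) 0 0.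
  rewrite Pm_form n_form !entD entZ !mulrDr.
  apply: lerD; first apply: lerD; try exact: hc.
  by apply: ler_wpM2r => //; exact: nrm_ge0.
have hQ := real_lerNnormlW (quad_real (col_mx x (col_mx y z)) (Wt_herm M hX))
   (hK (col_mx x (col_mx y z))).
have hP' := ler_wpM2l (eqbRL (ler0c xi) xi0) hP.
have hfin : K * (ctr (col_mx x (col_mx y z)) *m col_mx x (col_mx y z)) 0 0 <=
   xi%:C%C * (c%:C%C * (ctr (col_mx x (col_mx y z)) *m col_mx x (col_mx y z)) 0 0).
  rewrite mulrA -rmorphM; apply: ler_wpM2r => //; exact: nrm_ge0.
rewrite -(addNr (K * (ctr (col_mx x (col_mx y z)) *m col_mx x (col_mx y z)) 0 0)).
exact: lerD hQ (le_trans hfin hP').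
Qed.

End H.

Unset Implicit Arguments.

Theorem lemma8p1 (R : realType) (n m : nat) (M : model R n m) :
  minimal M -> ~ passive M ->
  forall X : 'M[complex R]_n, pd X ->
  exists xs : R, 0 < xs /\ psd (Wt X (shift M xs)) /\
    forall xi : R, xs < xi -> passive (shift M xi) /\ psd (Wt X (shift M xi)).
Proof.
move=> _ _ X hX.
have [c [c0 [c1 hc]]] := pd_lower hX.
have [K [K0 hK]] := quad_upper (Wt X M).
have Kk : (complex.Re K)%:C%C = K by apply: RRe_real; apply: ger0_real.
have k0 : 0 <= complex.Re K by rewrite -ler0c Kk.
have xs0 : 0 < complex.Re K / c + 1.
  by apply: ltr_wpDl => //; apply: divr_ge0 => //; exact: ltW.
have key xi : complex.Re K / c + 1 <= xi -> psd (Wt X (shift M xi)).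
  move=> hxi; apply: (key_psd hX c0 c1 hc hK).
    exact: le_trans (ltW xs0) hxi.
  rewrite -Kk lecR -ler_pdivrMr //.
  by apply: le_trans hxi; rewrite lerDl.
exists (complex.Re K / c + 1); split => //; split; first exact: key.
move=> xi /ltW hxi; split; last exact: key.
exact: psdWt_passive hX (key xi hxi).
Qed.
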